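(* For any infinite graph $G$ it is possible to attach vertices to the edges of $G$ (i.e. subdivide edges by new vertices) to form a graph that is VEL-parabolic.
   Context: Graphs are simple, connected, locally finite. For an infinite graph with base vertex $v_0$, let $\Gamma_\infty$ be the family of infinite vertex paths (consecutive vertices adjacent or equal) from $v_0$ to infinity (visiting each vertex only finitely often). The graph is VEL-parabolic if $\sup_m(\inf_{\gamma\in\Gamma_\infty}\sum_{v\in\gamma}m(v))^2/\sum_v m(v)^2=\infty$, the supremum over vertex metrics $m:V\to[0,\infty)$ of finite non-zero area, and VEL-hyperbolic otherwise. *)

(* Defs.v *)
From HB Require Import structures.
From mathcomp Require Import all_boot all_order all_algebra.
From mathcomp Require Import all_classical all_reals.
From mathcomp Require Import ereal esum.
Set Implicit Arguments. Unset Strict Implicit. Unset Printing Implicit Defensive.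
Import Order.TTheory GRing.Theory Num.Theory.
Local Open Scope classical_set_scope.
Local Open Scope ring_scope.

Section Graphs.
Variable W : choiceType.

Definition simple_graph (S : set W) (adj : W -> W -> Prop) : Prop :=
  (forall u v, adj u v -> S u /\ S v) /\
  (forall u v, adj u v -> adj v u) /\
  (forall v, ~ adj v v).

Definition locally_finite (S : set W) (adj : W -> W -> Prop) : Prop :=
  forall v, S v -> finite_set [set u | adj v u].

Definition connected_graph (S : set W) (adj : W -> W -> Prop) : Prop :=
  forall u v, S u -> S v ->
    exists (n : nat) (p : nat -> W),
      p 0%N = u /\ p n = v /\ (forall i, (i < n)%N -> adj (p i) (p i.+1)).

Definition path_to_infinity (S : set W) (adj : W -> W -> Prop) (v0 : W)
    (g : nat -> W) : Prop :=
  g 0%N = v0 /\ (forall k, S (g k)) /\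
  (forall k, g k.+1 = g k \/ adj (g k) (g k.+1)) /\
  (forall w, finite_set [set k | g k = w]).

Variable R : realType.

Definition area (S : set W) (m : W -> R) : \bar R :=
  \esum_(v in S) ((m v) ^+ 2)%:E.

Definition mlength (m : W -> R) (g : nat -> W) : \bar R :=
  \esum_(v in range g) (m v)%:E.

Definition Gamma_inf (S : set W) adj v0 : set (nat -> W) :=
  [set g | path_to_infinity S adj v0 g].

Definition min_length (S : set W) adj v0 (m : W -> R) : \bar R :=
  ereal_inf [set mlength m g | g in Gamma_inf S adj v0].

Definition vertex_metric (S : set W) (m : W -> R) : Prop :=
  (forall v, 0 <= m v) /\ (0 < area S m)%E /\ (area S m < +oo)%E.

Definition VEL (S : set W) adj v0 : \bar R :=
  ereal_sup [set ((min_length S adj v0 m * min_length S adj v0 m)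
                  * ((fine (area S m))^-1)%:E)%E
            | m in [set m | vertex_metric S m]].

Definition VEL_parabolic (S : set W) adj : Prop :=
  forall v0, S v0 -> VEL S adj v0 = +oo%E.

End Graphs.

(** D is an orientation of the edges (exactly one of D u v, D v u for each
    edge) and n u v is the number of new vertices placed on the edge
    oriented from u to v.  New vertices are inr (u, v, i), 1 <= i <= n u v,
    and the edge u--v becomes the path
      inl u, inr (u,v,1), ..., inr (u,v,n u v), inl v. *)
Section Subdivision.
Variables (V : choiceType) (adj : V -> V -> Prop)
          (D : V -> V -> Prop) (n : V -> V -> nat).

Definition sub_vertex := (V + (V * V * nat))%type.

Definition is_orientation : Prop :=
  forall u v, adj u v -> (D u v <-> ~ D v u).

Definition sub_set : set sub_vertex := fun x =>
  match x with
  | inl _ => True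
  | inr (u, v, i) => adj u v /\ D u v /\ (1 <= i)%N /\ (i <= n u v)%N
  end.

Definition sub_point (u v : V) (i : nat) : sub_vertex :=
  if i == 0%N then inl u
  else if (i <= n u v)%N then inr (u, v, i) else inl v.

Definition sub_adj (x y : sub_vertex) : Prop :=
  exists u v i, adj u v /\ D u v /\ (i <= n u v)%N /\
    ((x = sub_point u v i /\ y = sub_point u v i.+1) \/
     (y = sub_point u v i /\ x = sub_point u v i.+1)).

End Subdivision.

(* Main.v *)
Require Import Defs.
From HB Require Import structures.
From mathcomp Require Import all_boot all_order all_algebra.
From mathcomp Require Import all_classical all_reals.
From mathcomp Require Import ereal esum.
From mathcomp Require Import zify ring lra.
Local Open Scope classical_set_scope.
Set Implicit Arguments. Unset Strict Implicit. Unset Printing Implicit Defensive.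
Import Order.TTheory GRing.Theory Num.Theory.

Section Comb.
Variables (V : choiceType) (adj D : V -> V -> Prop) (n : V -> V -> nat).
Hypothesis n_pos : forall u v, (0 < n u v)%N.
Hypothesis adj_irr : forall v, ~ adj v v.

Local Notation A := (sub_adj adj D n).
Local Notation sp := (sub_point n).

Lemma sp_inr u v i u' v' j : sp u v i = inr (u', v', j) ->
  [/\ u' = u, v' = v, j = i & (1 <= i <= n u v)%N].
Proof.
rewrite /sub_point; case: eqP => [//|/eqP i0]; case: ifP => // iv [<- <- <-].
by split => //; rewrite lt0n i0.
Qed.

Lemma sp_inl u v i x : sp u v i = inl x ->
  (i = 0%N /\ x = u) \/ (n u v < i)%N /\ x = v.
Proof.
rewrite /sub_point; case: eqP => [-> [<-]|/eqP i0]; first by left.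
by case: ifP => // /negbT; rewrite -ltnNge => ? [<-]; right.
Qed.

Lemma sub_adj_sym x y : A x y -> A y x.
Proof.
by move=> [u [v [i [h1 [h2 [h3 h4]]]]]]; exists u, v, i; do 3 split => //; case: h4; [right|left].
Qed.

Lemma A_inl_inl x y : ~ A (inl x) (inl y).
Proof.
move=> [u [v [i [_ [_ [hi h]]]]]].
have key : forall a b, inl a = sp u v i -> inl b = sp u v i.+1 -> False.
  move=> a b /esym/sp_inl h1 /esym/sp_inl h2.
  case: h1 => -[i0 _]; case: h2 => -[i1 _]; try lia.
  subst i; have := n_pos u v; lia.
by case: h => -[h1 h2]; [apply: (key x y)|apply: (key y x)].
Qed.

Lemma A_inr u v i y : A (inr (u, v, i)) y ->
  (exists j, y = inr (u, v, j) /\ (j = i.+1 \/ i = j.+1)) \/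
  (y = inl u /\ i = 1%N) \/ (y = inl v /\ i = n u v).
Proof.
move=> [u' [v' [k [a [d [hk h]]]]]].
case: h => -[h1 h2].
- have [eu ev ek hi] := sp_inr (esym h1); subst u' v' k.
  move: h2; rewrite /sub_point /=; case: ifP => [ik|/negbT]; last first.
    by rewrite -ltnNge => ik ->; right; right; split => //; lia.
  by move=> ->; left; exists i.+1; split => //; left.
- have [eu ev ek hi] := sp_inr (esym h2); subst u' v' i.
  move: h1; rewrite /sub_point /=; case: eqP => [-> -> | /eqP k0].
    by right; left.
  rewrite ifT; last lia.
  by move=> ->; left; exists k; split => //; right.
Qed.

Lemma A_inl_inr x u v i : A (inl x) (inr (u, v, i)) ->
  (x = u /\ i = 1%N) \/ (x = v /\ i = n u v).
Proof.
move=> /sub_adj_sym /A_inr [[j [//]]|[[[->] ->]|[[->] ->]]]; by [left|right].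
Qed.



Lemma ivt (p : nat -> nat) a b :
  (forall j, (a <= j < b)%N -> p j.+1 = p j \/ p j.+1 = (p j).+1 \/ p j = (p j.+1).+1) ->
  (a <= b)%N -> forall i, (p a <= i <= p b)%N \/ (p b <= i <= p a)%N ->
  exists j, (a <= j <= b)%N /\ p j = i.
Proof.
elim: b => [|b IH] hs hab i hi.
  have a0 : a = 0%N by lia.
  by subst a; exists 0%N; split => //; lia.
have [eab|hab'] := eqVneq a b.+1.
  subst a.
  by exists b.+1; split => //; lia.
have hab2 : (a <= b)%N by lia.
have hs' : forall j, (a <= j < b)%N -> p j.+1 = p j \/ p j.+1 = (p j).+1 \/ p j = (p j.+1).+1.
  by move=> j hj; apply: hs; lia.
have hb := hs b ltac:(lia).
have H : (exists j, (a <= j <= b)%N /\ p j = i) \/ i = p b.+1.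
  case: hi => hi.
    have [ib|ib] := leqP i (p b); [left; apply: IH => //; lia|right; lia].
  have [ib|ib] := leqP (p b) i; [left; apply: IH => //; lia|right; lia].
case: H => [[j [hj1 hj2]]|->].
  by exists j; split => //; lia.
by exists b.+1; split => //; lia.
Qed.

Lemma A_inr_edge u v i y : A (inr (u, v, i)) y ->
  [/\ adj u v, D u v & (1 <= i <= n u v)%N].
Proof.
move=> [u' [v' [k [a [d [hk h]]]]]].
case: h => -[h1 h2].
- by have [eu ev ek hi] := sp_inr (esym h1); subst.
- have := sp_inr (esym h2) => -[eu ev ek hi]; by subst; split.
Qed.

Definition walk (g : nat -> sub_vertex V) :=
  forall k, g k.+1 = g k \/ A (g k) (g k.+1).

Definition pos (x : sub_vertex V) : nat :=
  match x with inr (_, _, k) => k | inl _ => 0%N end.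

Lemma cross g s t x y : walk g -> (s < t)%N -> g s = inl y -> g t = inl x ->
  x <> y -> (forall j, (s < j < t)%N -> exists e, g j = inr e) ->
  exists u v, [/\ adj u v, D u v, (u = x /\ v = y) \/ (u = y /\ v = x) &
    forall i, (1 <= i <= n u v)%N -> exists j, g j = inr (u, v, i)].
Proof.
move=> hw hst gs gt xy hin.
have hst1 : (s.+1 < t)%N.
  rewrite ltn_neqAle hst andbT; apply/eqP => e; subst t.
  case: (hw s); rewrite gs gt; first by case=> /xy.
  by move/A_inl_inl.
have [[[u v] i0] g1] := hin s.+1 ltac:(lia).
have [a1 d1 _] : [/\ adj u v, D u v & (1 <= i0 <= n u v)%N].
  case: (hw s); rewrite g1 gs => // /sub_adj_sym; exact: A_inr_edge.
have hstart : (y = u /\ i0 = 1%N) \/ (y = v /\ i0 = n u v).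
  by case: (hw s); rewrite g1 gs => // /A_inl_inr.
have inv : forall d, (s.+1 + d < t)%N -> exists k, g (s.+1 + d)%N = inr (u, v, k).
  elim=> [|d IH] hd; first by exists i0; rewrite addn0.
  have [k gk] := IH ltac:(lia).
  have [e ge] := hin (s.+1 + d.+1)%N ltac:(lia).
  case: (hw (s.+1 + d)%N); rewrite addnS gk.
    by move=> ->; exists k.
  by rewrite -addnS ge => /A_inr [[j [[->] _]]|[[//]|[//]]]; exists j.
have hsteps : forall j, (s.+1 <= j < t.-1)%N -> pos (g j.+1) = pos (g j) \/
    pos (g j.+1) = (pos (g j)).+1 \/ pos (g j) = (pos (g j.+1)).+1.
  move=> j hj.
  have [k gk] := inv (j - s.+1)%N ltac:(lia).
  have [k' gk'] := inv (j.+1 - s.+1)%N ltac:(lia).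
  rewrite subnKC in gk; last lia.
  rewrite subnKC in gk'; last lia.
  rewrite gk gk' /=.
  case: (hw j); rewrite gk gk'; first by case=> ->; left.
  by move=> /A_inr [[j' [[->] [->|->]]]|[[//]|[//]]]; right; [left|right].
have [q gq] := inv (t.-1 - s.+1)%N ltac:(lia).
rewrite subnKC in gq; last lia.
have hend : (x = u /\ q = 1%N) \/ (x = v /\ q = n u v).
  case: (hw t.-1); rewrite prednK ?gq ?gt; try lia; first by [].
  move=> /A_inr [[j [//]]|[[[->] ->]|[[->] ->]]]; by [left|right].
have uv : u <> v by move=> e; subst v; exact: (adj_irr a1).
have cover : forall i, (pos (g s.+1) <= i <= pos (g t.-1))%N \/
     (pos (g t.-1) <= i <= pos (g s.+1))%N -> exists j, g j = inr (u, v, i).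
  move=> i hi.
  have [j [hj <-]] := ivt hsteps ltac:(lia) hi.
  have [k gk] := inv (j - s.+1)%N ltac:(lia).
  by rewrite subnKC in gk; [exists j; rewrite gk|lia].
exists u, v; split => //.
  case: hstart => -[ey _]; case: hend => -[ex _]; subst;
  by [left|right|case: xy].
move=> i hi; apply: cover; rewrite g1 gq /=.
by case: hstart => -[ey ->]; case: hend => -[ex ->]; subst; try (by lia); case: xy.
Qed.

Lemma finite_nat_bounded (Z : set nat) : finite_set Z ->
  exists T, forall k, Z k -> (k < T)%N.
Proof.
move=> /finite_seqP [s ->]; exists (sumn s).+1 => k /=.
elim: s => [//|a s IH] /=; rewrite in_cons => /orP[/eqP ->|/IH]; lia.
Qed.

Lemma tail_infinite T (P : set nat) : (forall t, (T <= t)%N -> P t) -> ~ finite_set P.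
Proof.
move=> hP fP; apply: infinite_nat.
apply: (@sub_finite_set _ _ (`I_T `|` P)); last by rewrite finite_setU; split => //; exact: finite_II.
move=> t _; have [tT|tT] := ltnP t T; [by left|by right; apply: hP].
Qed.

Variable S : set (sub_vertex V).
Hypothesis S_inr : forall u v i, S (inr (u, v, i)) -> (i <= n u v)%N.

Section Walk.
Variable g : nat -> sub_vertex V.
Hypothesis hw : walk g.
Hypothesis gS : forall k, S (g k).
Hypothesis gfin : forall w, finite_set [set k | g k = w].

Lemma inl_often T : exists t, (T <= t)%N /\ exists x, g t = inl x.
Proof.
apply: contrapT => hno.
have hinr : forall t, (T <= t)%N -> exists e, g t = inr e.
  move=> t tT; case E : (g t) => [x|e]; last by exists e.
  by exfalso; apply: hno; exists t; split => //; exists x.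
have [[[u v] i] gT] := hinr T (leqnn T).
have inv : forall d, exists k, g (T + d)%N = inr (u, v, k) /\ (k <= n u v)%N.
  elim=> [|d [k [gk kn]]]; first by exists i; rewrite addn0 gT; split => //; apply: S_inr; rewrite -gT.
  have [e ge] := hinr (T + d.+1)%N ltac:(lia).
  case: (hw (T + d)%N); rewrite addnS gk.
    by move=> ->; exists k.
  rewrite -addnS ge => hA; have := hA.
  move=> /A_inr [[j [[ej] _]]|[[//]|[//]]]; subst e; exists j; split => //.
  by have [_ _ /andP[]] := A_inr_edge (sub_adj_sym hA).
apply: (@tail_infinite T (\bigcup_(i in `I_(n u v).+1) [set k | g k = inr (u, v, i)])).
  move=> t tT; have [k [gk kn]] := inv (t - T)%N; rewrite subnKC in gk => //.
  by exists k => //=.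
apply: bigcup_finite; first exact: finite_II.
by move=> j _; apply: gfin.
Qed.

Lemma new_vertex (L : seq V) : exists t x, g t = inl x /\ x \notin L.
Proof.
have [T hT] := @finite_nat_bounded (\bigcup_(x in [set` L]) [set k | g k = inl x])
  (bigcup_finite (finite_seq L) (fun x _ => gfin (inl x))).
have [t [tT [x gt]]] := inl_often T.
exists t, x; split => //; apply/negP => xL.
have := hT t; rewrite /bigcup /=; move=> /(_ (ex_intro2 _ _ x xL gt)); lia.
Qed.

End Walk.

Section Count.
Variable g : nat -> sub_vertex V.
Hypothesis hw : walk g.
Hypothesis gS : forall k, S (g k).
Hypothesis gfin : forall w, finite_set [set k | g k = w].

Definition getl (x : sub_vertex V) : option V :=
  match x with inl y => Some y | inr _ => None end.

Definition visited T := pmap (fun k => getl (g k)) (iota 0 T.+1).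

Lemma mem_visited T x : x \in visited T <-> exists k, (k <= T)%N /\ g k = inl x.
Proof.
rewrite /visited mem_pmap; split.
  move=> /mapP [k]; rewrite mem_iota => hk; case E : (g k) => [y|e] //= [->].
  by exists k; split => //; lia.
move=> [k [kT gk]]; apply/mapP; exists k; first by rewrite mem_iota; lia.
by rewrite gk.
Qed.

Definition good_edge (e : V * V) :=
  [/\ adj e.1 e.2, D e.1 e.2 &
    forall i, (1 <= i <= n e.1 e.2)%N -> exists j, g j = inr (e.1, e.2, i)].

Lemma count_edges N : exists T (E : seq (V * V)),
  [/\ exists k0, (k0 <= T)%N /\ exists x, g k0 = inl x,
      uniq E, size E = N &
      forall e, e \in E -> good_edge e /\ e.1 \in visited T /\ e.2 \in visited T].
Proof.
elim: N => [|N [T [E [[k0 [k0T [x0 gk0]]] uE sE hE]]]].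
  have [t [_ [x gt]]] := inl_often hw gS gfin 0.
  by exists t, [::]; split => //; exists t; split => //; exists x.
pose newb t := if g t is inl x then x \notin visited T else false.
have exnew : exists t, newb t.
  have [t [x [gt xn]]] := new_vertex hw gS gfin (visited T).
  by exists t; rewrite /newb gt.
case: (ex_minnP exnew) => t; rewrite /newb; case gt : (g t) => [x|//] xn tmin.
have tT : (T < t)%N.
  rewrite ltnNge; apply/negP => tT; move/negP: xn; apply.
  by apply/mem_visited; exists t.
pose isl k := (if g k is inl _ then true else false) && (k < t)%N.
have exl : exists k, isl k by exists k0; rewrite /isl gk0 /=; lia.
have ubl : forall k, isl k -> (k <= t)%N by move=> k /andP[_]; lia.
case: (ex_maxnP exl ubl) => s; rewrite /isl; case gs : (g s) => [y|//] /= st smax.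
have yv : y \in visited T.
  apply/negPn/negP => yn; have := tmin s; rewrite /newb gs => /(_ yn); lia.
have xy : x <> y by move=> e; subst y; move: xn; rewrite yv.
have hin : forall j, (s < j < t)%N -> exists e, g j = inr e.
  move=> j hj; case gj : (g j) => [z|e]; last by exists e.
  have := smax j; rewrite /isl gj /=; lia.
have [u [v [a d huv hcov]]] := cross hw st gs gt xy hin.
have xvt : x \in visited t by apply/mem_visited; exists t.
have yvt : y \in visited t by apply/mem_visited; exists s; split => //; lia.
have mono : forall z, z \in visited T -> z \in visited t.
  by move=> z /mem_visited [k [kT gk]]; apply/mem_visited; exists k; split => //; lia.
exists t, ((u, v) :: E); split => //.
- by exists k0; split; [lia|exists x0].
- rewrite /= uE andbT; apply/negP => /hE [_ [h1 h2]].
  by case: huv => -[eu ev]; subst; [move: xn; rewrite h1|move: xn; rewrite h2].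
- by rewrite /= sE.
- move=> e; rewrite in_cons => /orP [/eqP -> | /hE [ge [h1 h2]]].
    by split; [split|case: huv => -[-> ->]].
  by split => //; split; apply: mono.
Qed.

End Count.
End Comb.

Section Concrete.
Local Open Scope ring_scope.
Variables (R : realType) (V : choiceType) (adj : V -> V -> Prop) (code : V -> nat).
Hypothesis code_inj : injective code.

Definition ec (u v : V) : nat := pickle (code u, code v).
Definition DD (u v : V) : Prop := (code u < code v)%N.
Definition nn (u v : V) : nat := (2 ^ ec u v)%N.
Definition mm (x : sub_vertex V) : R :=
  match x with inl _ => 0 | inr (u, v, _) => ((8 * nn u v)%N%:R)^-1 end.
Definition key (x : sub_vertex V) : nat :=
  match x with inl y => (2 * code y)%N | inr (u, v, i) => (2 * (nn u v + i.-1)).+1 end.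
Definition hh (j : nat) : R := (j.+1%:R)^-1 - (j.+2%:R)^-1.

Lemma nn_pos u v : (0 < nn u v)%N.
Proof. by rewrite /nn expn_gt0. Qed.

Lemma ec_inj u v u' v' : ec u v = ec u' v' -> u = u' /\ v = v'.
Proof.
by move=> /(pcan_inj pickleK) [/code_inj -> /code_inj ->].
Qed.

Local Notation SS := (sub_set adj DD nn).

Lemma key_inj : {in SS &, injective key}.
Proof.
move=> [x|[[u v] i]] [y|[[u' v'] i']]; rewrite !inE /= => hx hy.
- by move=> h; congr inl; apply: code_inj; lia.
- lia.
- lia.
- case: hx => _ [_ hi]; case: hy => _ [_ hi'].
  rewrite /nn in hi hi' * => h.
  have ec_eq : ec u v = ec u' v'.
    have L : forall c c' : nat, (c < c')%N -> (2 ^ c.+1 <= 2 ^ c')%N.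
      by move=> c c' cc; apply: leq_pexp2l.
    move: (L (ec u v) (ec u' v')) (L (ec u' v') (ec u v)); rewrite !expnS.
    lia.
  have [eu ev] := ec_inj ec_eq; subst u' v'.
  by congr (inr (_, _, _)); lia.
Qed.

Lemma hhE j : hh j = ((j.+1 * j.+2)%N%:R)^-1.
Proof.
rewrite /hh natrM; field.
by apply/andP; split; rewrite gt_eqF // ltr_wpDr // ltr0n.
Qed.

Lemma hh_ge0 j : 0 <= hh j.
Proof. by rewrite hhE invr_ge0 ler0n. Qed.

Lemma mm_ge0 x : 0 <= mm x.
Proof. by case: x => [//|[[u v] i]]; rewrite /= invr_ge0 ler0n. Qed.

Lemma mm_hh x : SS x -> mm x ^+ 2 <= hh (key x).
Proof.
case: x => [y _|[[u v] i] [_ [_ hi]]]; first by rewrite /= expr0n hh_ge0.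
rewrite [mm _]/= [key _]/= hhE exprVn -natrX lef_pV2 ?inE ?ltr0n ?expn_gt0 ?muln_gt0 ?nn_pos //.
rewrite ler_nat; have := nn_pos u v; move: hi; set N := nn u v; nia.
all: by rewrite posrE ltr0n ?expn_gt0 ?muln_gt0 ?nn_pos.
Qed.

Lemma sum_hh M : \sum_(j < M) hh j <= 1.
Proof.
have -> : \sum_(j < M) hh j = 1 - (M.+1%:R)^-1.
  pose f (j : nat) : R := - (j.+1%:R)^-1.
  rewrite -(big_mkord xpredT) (eq_bigr (fun k => f k.+1 - f k)).
    by rewrite telescope_sumr // /f opprK addrC invr1.
  by move=> k _; rewrite /f /hh opprK addrC.
by rewrite lerBlDr lerDl invr_ge0 ler0n.
Qed.


Lemma area_le1 : (area SS mm <= 1)%E.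
Proof.
rewrite /area; apply: ge_ereal_sup => _ [X [finX XS] <-].
apply: (@le_trans _ _ (\sum_(x \in X) (hh (key x))%:E)%E).
  by apply: lee_fsum => // x Xx; rewrite lee_fin; exact: mm_hh (XS x Xx).
rewrite -(@fsbig_image _ _ _ _ _ X key (fun j => (hh j)%:E)); last first.
  by move=> x y; rewrite !inE => /XS hx /XS hy; apply: key_inj; rewrite inE.
have [M hM] := finite_nat_bounded (finite_image key finX).
apply: (@le_trans _ _ (\sum_(j \in `I_M) (hh j)%:E)%E).
  apply: lee_fsum_nneg_subset.
  - exact: finite_image.
  - exact: finite_II.
  - by move=> j; rewrite !inE /= => /hM.
  - by move=> j _; rewrite lee_fin hh_ge0.
by rewrite -fsbig_ord sumEFin lee_fin; exact: sum_hh.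
Qed.


Hypothesis adj_irr : forall v, ~ adj v v.

Lemma unbounded_pinfty (x : \bar R) : (forall N : nat, (N%:R)%:E <= x)%E -> x = +oo%E.
Proof.
case: x => [r||] // H.
  have := H (Num.Def.trunc r).+1; rewrite lee_fin => h.
  by have := truncnS_gt r; rewrite ltNge h.
by have := H 0%N.
Qed.

Definition Iset (e : V * V) : set (sub_vertex V) :=
  [set inr (e.1, e.2, i.+1) | i in `I_(nn e.1 e.2)].

Fixpoint Xset (E : seq (V * V)) : set (sub_vertex V) :=
  if E is e :: E' then Iset e `|` Xset E' else set0.

Lemma finite_Iset e : finite_set (Iset e).
Proof. by apply: finite_image; exact: finite_II. Qed.

Lemma finite_Xset E : finite_set (Xset E).
Proof.
elim: E => [|e E IH] /=; first exact: finite_set0.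
by rewrite finite_setU; split => //; exact: finite_Iset.
Qed.

Lemma Xset_lab E x : Xset E x ->
  exists e i, [/\ e \in E, (i < nn e.1 e.2)%N & x = inr (e.1, e.2, i.+1)].
Proof.
elim: E => [//|e E IH] /= [[i hi <-]|/IH [e' [i [h1 h2 h3]]]].
  by exists e, i; split => //; rewrite in_cons eqxx.
by exists e', i; split => //; rewrite in_cons h1 orbT.
Qed.

Lemma sum_Iset e : (\sum_(x \in Iset e) (mm x)%:E = (8^-1 : R)%:E)%E.
Proof.
rewrite /Iset fsbig_image; last by move=> i j _ _ [].
rewrite -fsbig_ord sumEFin sumr_const card_ord /=.
congr (_%:E); rewrite -mulr_natr natrM; field.
by rewrite pnatr_eq0 -lt0n nn_pos.
Qed.

Lemma sum_Xset E : uniq E ->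
  (\sum_(x \in Xset E) (mm x)%:E = ((size E)%:R / 8 : R)%:E)%E.
Proof.
elim: E => [|e E IH] /=; first by rewrite fsbig_set0 mul0r.
move=> /andP [eE uE]; rewrite fsbigU; first last.
- move=> x [] [i hi <-] /Xset_lab [e' [j [h1 h2 [h3 h4]]]].
  by exfalso; move: eE; rewrite (_ : e = e') ?h1 //; case: e e' h3 h4 {hi h1 h2} => ? ? [? ?] /= -> ->.
- exact: finite_Xset.
- exact: finite_Iset.
rewrite [LHS]/= sum_Iset IH // -EFinD; congr (_%:E).
by rewrite -[(size E).+1]addn1 natrD; field.
Qed.

Lemma mlength_inf g v0 : path_to_infinity SS (sub_adj adj DD nn) v0 g ->
  mlength mm g = +oo%E.
Proof.
move=> [_ [gS [hw gfin]]].
apply: unbounded_pinfty => N.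
have SS_inr : forall u v i, SS (inr (u, v, i)) -> (i <= nn u v)%N.
  by move=> u v i [_ [_ [_ h]]].
have [T [E [_ uE sE hE]]] := count_edges nn_pos adj_irr SS_inr hw gS gfin (8 * N).
rewrite /mlength; apply: esum_ge; exists (Xset E).
  split; first exact: finite_Xset.
  move=> x /Xset_lab [e [i [eE hi ->]]].
  have [[_ _ cov] _] := hE e eE.
  have [j gj] := cov i.+1 hi.
  by exists j.
rewrite sum_Xset // sE lee_fin natrM mulrAC divff ?mul1r // pnatr_eq0.
Qed.


Lemma area_gt0 a b : adj a b -> DD a b -> (0 < area SS mm)%E.
Proof.
move=> ab dab.
have hx : SS (inr (a, b, 1%N)) by split => //; split => //; split => //; exact: nn_pos.
apply: (@lt_le_trans _ _ ((mm (inr (a, b, 1%N)) ^+ 2)%:E)).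
  by rewrite lte_fin exprn_gt0 // /= invr_gt0 ltr0n muln_gt0 nn_pos.
apply: esum_ge; exists [set inr (a, b, 1%N)].
  by split; [exact: finite_set1|move=> y ->].
by rewrite fsbig_set1.
Qed.

Lemma parabolic : (exists a b, adj a b /\ DD a b) ->
  VEL_parabolic R SS (sub_adj adj DD nn).
Proof.
move=> [a [b [ab dab]]] v0 _.
have a0 := area_gt0 ab dab.
have a1 : (area SS mm < +oo)%E by apply: le_lt_trans area_le1 (ltry _).
have ml : min_length SS (sub_adj adj DD nn) v0 mm = +oo%E.
  by apply/ereal_inf_pinfty => _ [g hg <-]; exact: mlength_inf hg.
apply/eqP; rewrite -leye_eq; apply: ereal_sup_ubound; exists mm.
  by split; [exact: mm_ge0|split].
rewrite ml mulyy gt0_mulye // lte_fin invr_gt0; apply: fine_gt0.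
by rewrite a0 a1.
Qed.

End Concrete.

Lemma countable_code (V : choiceType) (adj : V -> V -> Prop) (a : V) :
  connected_graph [set: V] adj -> locally_finite [set: V] adj ->
  exists code : V -> nat, injective code.
Proof.
move=> hc hlf.
pose fix ball (k : nat) : set V :=
  if k is k'.+1 then ball k' `|` \bigcup_(x in ball k') [set u | adj x u] else [set a].
have fin : forall k, finite_set (ball k).
  elim=> [|k IH] /=; first exact: finite_set1.
  rewrite finite_setU; split => //; apply: bigcup_finite => // x _; exact: hlf.
have cov : [set: V] = \bigcup_(k in [set: nat]) ball k.
  apply/seteqP; split => // v _.
  have [m [p [p0 [pm hp]]]] := hc a v I I.
  have : forall i, (i <= m)%N -> ball i (p i).
    elim=> [|i IH] him /=; first by rewrite p0.
    right; exists (p i); first by apply: IH; lia.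
    by apply: hp; lia.
  by move=> /(_ m (leqnn m)); rewrite pm => h; exists m.
have : countable [set: V].
  rewrite cov; apply: bigcup_countable => // k _.
  exact: finite_set_countable.
move=> /countable_injP [f hf]; exists f => x y e; apply: hf => //; rewrite inE //.
Qed.

Unset Implicit Arguments.

Theorem mainTheorem8 (R : realType) (V : choiceType) (adj : V -> V -> Prop) :
  simple_graph [set: V] adj ->
  connected_graph [set: V] adj ->
  locally_finite [set: V] adj ->
  infinite_set [set: V] ->
  exists (D : V -> V -> Prop) (n : V -> V -> nat),
    is_orientation adj D /\
    VEL_parabolic R (sub_set adj D n) (sub_adj adj D n).
Proof.
move=> [_ [hsym hirr]] hc hlf hinf.
have [a _] : exists a : V, True.
  apply: contrapT => hne; apply: hinf.
  rewrite (_ : [set: V] = set0); first exact: finite_set0.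
  by apply/seteqP; split => // x _; apply: hne; exists x.
have [b ba] : exists b : V, b <> a.
  apply: contrapT => hne; apply: hinf.
  apply: (@sub_finite_set _ _ [set a]); last exact: finite_set1.
  by move=> x _ /=; apply: contrapT => xa; apply: hne; exists x.
have [code code_inj] := countable_code a hc hlf.
have hedge : exists u v, adj u v /\ DD code u v.
  have [m [p [p0 [pm hp]]]] := hc a b I I.
  have m0 : (0 < m)%N.
    rewrite lt0n; apply/eqP => m0; subst m; apply: ba; by rewrite -pm p0.
  have e01 := hp 0%N m0.
  have neq : code (p 0%N) <> code (p 1%N).
    by move=> /code_inj e; rewrite -e in e01; exact: hirr e01.
  rewrite /DD; case: (ltngtP (code (p 0%N)) (code (p 1%N))) => h.
  - by exists (p 0%N), (p 1%N).
  - by exists (p 1%N), (p 0%N); split => //; apply: hsym.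
  - by exfalso; apply: neq.
exists (DD code), (nn code); split.
  move=> u v uv; rewrite /DD.
  have neq : code u <> code v by move=> /code_inj e; subst v; exact: hirr uv.
  lia.
exact: (parabolic R code_inj hirr hedge).
Qed.
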